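(* Let $n\ge 2$ and let $P=[p_1,\ldots,p_n]\neq[n,n-1,\ldots,1]$ be an arithmetically progressed permutation with ratio $k$ such that $p_1\in\{1,k+1,n\}$. Then there exists a string $\mathsf{T}$ of length $n$ over the binary alphabet $\{\mathtt{a},\mathtt{b}\}$ ($\mathtt{a}<\mathtt{b}$) with $\mathsf{SA}_{\mathsf{T}}=P$.
   Context: Lexicographic order with a proper prefix smaller than the longer string; suffix array $\mathsf{SA}_{\mathsf{T}}$: permutation of $[1..n]$ such that $\mathsf{T}[\mathsf{SA}_{\mathsf{T}}[i]..n]$ is the $i$-th smallest suffix. $x\bmod n$ denotes the representative of $x$ modulo $n$ in $[1..n]$. An arithmetically progressed permutation of length $n$ with ratio $k\in[1..n-1]$ is a permutation $P=[p_1,\ldots,p_n]$ of $[1..n]$ with $p_{i+1}=p_i+k\bmod n$. *)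

(* Defs.v *)
From mathcomp Require Import all_boot.
Set Implicit Arguments. Unset Strict Implicit. Unset Printing Implicit Defensive.

(* Strings over {a,b} are seq bool with a := false, b := true (so a < b). *)

Fixpoint lex_lt (s t : seq bool) : bool :=
  match s, t with
  | [::], [::] => false
  | [::], _ :: _ => true
  | _ :: _, [::] => false
  | x :: s', y :: t' => (x < y) || ((x == y) && lex_lt s' t')
  end.

(* x mod n with representative in [1..n] (for n >= 1) *)
Definition modn1 (x n : nat) : nat := ((x + n - 1) %% n).+1.

(* the suffix T[i..n] (1-based) *)
Definition suffix (T : seq bool) (i : nat) : seq bool := drop i.-1 T.

Definition is_suffix_array (T : seq bool) (P : seq nat) : Prop :=
  perm_eq P (iota 1 (size T)) /\
  forall i, i.+1 < size P ->
    lex_lt (suffix T (nth 0 P i)) (suffix T (nth 0 P i.+1)).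

Definition ap_perm (n k : nat) (P : seq nat) : Prop :=
  [/\ size P = n, perm_eq P (iota 1 n), 1 <= k <= n.-1 &
      forall i, i.+1 < n -> nth 0 P i.+1 = modn1 (nth 0 P i + k) n].

(* Main.v *)
Require Import Defs.
From mathcomp Require Import all_boot zify.

Lemma key (n : nat) (T : seq bool) (Q s : nat -> nat) (L : nat -> bool) z :
 size T = n ->
 (forall r, r < n -> Q r < n) ->
 (forall r, r < n -> nth false T (Q r) = L r) ->
 (forall r, r < n -> s r < n) ->
 (forall r, r < n -> r <> z -> Q (s r) = (Q r).+1) ->
 z < n -> Q z = n.-1 ->
 (forall r1 r2, r1 < n -> r2 < n -> Q r1 = Q r2 -> r1 = r2) ->
 (forall x y, x < y -> y < n -> (L x < L y) \/ (L x = L y /\ (x = z \/ (y <> z /\ s x < s y)))) ->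
 forall x y, x < y -> y < n -> lex_lt (drop (Q x) T) (drop (Q y) T).
Proof.
move=> sT Qn TL sn Qs zn Qz Qi H.
suff: forall d x y, n - Q x <= d -> x < y -> y < n -> lex_lt (drop (Q x) T) (drop (Q y) T).
  by move=> G x y; apply: (G (n - Q x)).
elim=> [|d IH] x y hd xy yn.
  have := Qn x ltac:(lia); lia.
have xn : x < n by lia.
rewrite (drop_nth false) ?sT ?Qn // (@drop_nth _ false (Q y) T) ?sT ?Qn // !TL //=.
case: (H x y xy yn) => [-> //|[E C]].
rewrite E eqxx /=; apply/orP; right.
case: (eqVneq x z) => [xz|xz].
  subst x.
  have yz : Q y <> n.-1 by move=> Q'; have := Qi _ _ yn zn ltac:(lia); lia.
  have nn : (n.-1).+1 = n by lia.
  rewrite Qz nn drop_oversize ?sT //.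
  rewrite (drop_nth false) ?sT //; have := Qn y yn; lia.
case: C => [xz'|[yz sxy]]; first by rewrite xz' eqxx in xz.
have xz' : x <> z by move/eqP: xz.
rewrite -(Qs x) // -(Qs y) //.
apply: IH => //; last by apply: sn.
rewrite Qs //.
lia.
Qed.

Lemma cond (n m z k' : nat) (s : nat -> nat) :
  0 < k' -> k' < n -> z < n ->
  (forall r, r < n -> s r = if r + k' < n then r + k' else r + k' - n) ->
  m + k' <= n ->
  (forall r, m <= r -> r <> z -> r < n -> n <= r + k') ->
  (forall r, r < z -> (m <= r) != (m <= z)) ->
  forall x y, x < y -> y < n ->
   ((m <= x) < (m <= y)) \/ ((m <= x) = (m <= y) /\ (x = z \/ (y <> z /\ s x < s y))).
Proof.
move=> k0 kn zn sf a b c x y xy yn.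
case: (eqVneq x z) => [E|xz].
  subst x.
  case: (leqP m z) => hz; case: (leqP m y) => hy.
  - by right; split => //; left.
  - lia.
  - by left; idtac.
  - by right; split => //; left.
have xz' : x <> z by apply/eqP.
case: (leqP m x) => hx.
- have hy : m <= y by lia.
  rewrite hy; right; split => //; right.
  have yz : y <> z.
    move=> E; subst y; have := c x xy; rewrite hx hy //.
  have h1 := b x hx xz' ltac:(lia).
  have h2 := b y hy yz yn.
  split => //; rewrite !sf; try lia.
  case: ifP => H1; case: ifP => H2; lia.
- case: (leqP m y) => hy; first by left.
  right; split => //; right.
  have yz : y <> z.
    move=> E; subst y; have := c x xy; rewrite (leqNgt m x) hx (leqNgt m z) hy //.
  split => //; rewrite !sf; try lia.
  case: ifP => H1; case: ifP => H2; lia.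
Qed.

Theorem theorem9 (n k : nat) (P : seq nat) :
  2 <= n ->
  ap_perm n k P ->
  P <> rev (iota 1 n) ->
  nth 0 P 0 \in [:: 1; k.+1; n] ->
  exists T : seq bool, size T = n /\ is_suffix_array T P.
Proof.
move=> n2 [sP pP /andP[k1 kn] rec] _ hp1.
have n0 : 0 < n by lia.
set p1 := nth 0 P 0 in hp1.
have p1in : p1 \in iota 1 n by rewrite -(perm_mem pP) mem_nth // sP; lia.
rewrite mem_iota in p1in.
set c := p1.-1.
pose Q r := (c + r * k) %% n.
have Qn : forall r, Q r < n by move=> r; rewrite /Q ltn_pmod.
have nthP : forall r, r < n -> nth 0 P r = (Q r).+1.
  elim=> [|r IH] rn.
    by rewrite /Q mul0n addn0 modn_small /c; lia.
  rewrite rec // IH; last lia.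
  rewrite /modn1; congr S.
  have -> : (Q r).+1 + k + n - 1 = Q r + k + n by lia.
  rewrite modnDr /Q modnDml mulSn; congr modn; lia.
have uP : uniq P by rewrite (perm_uniq pP) iota_uniq.
have Qi : forall r1 r2, r1 < n -> r2 < n -> Q r1 = Q r2 -> r1 = r2.
  move=> r1 r2 h1 h2 E.
  have : nth 0 P r1 == nth 0 P r2 by rewrite !nthP // E.
  by rewrite nth_uniq ?sP // => /eqP.
pose rk u := index u.+1 P.
have rkP : forall u, u < n -> rk u < n /\ Q (rk u) = u.
  move=> u un.
  have uin : u.+1 \in P by rewrite (perm_mem pP) mem_iota; lia.
  split; first by rewrite -sP index_mem.
  have := nth_index 0 uin; rewrite nthP; last by rewrite -sP index_mem.
  by case.
set k' := rk ((c + 1) %% n).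
have [k'n Qk'] := rkP _ (ltn_pmod (c + 1) n0).
rewrite -/k' in k'n Qk'.
have QsAll : forall r, Q ((r + k') %% n) = (Q r + 1) %% n.
  move=> r; rewrite /Q.
  rewrite -modnDmr modnMml modnDmr modnDml mulnDl addnA.
  rewrite -addnA [r * k + _]addnC addnA -modnDml.
  move: Qk'; rewrite /Q => ->.
  by rewrite modnDml addnAC.
have k'0 : 0 < k'.
  case: (posnP k') => // E.
  move: Qk'; rewrite E /Q mul0n addn0 (modn_small (m:=c)); last by rewrite /c; lia.
  case: (ltnP (c + 1) n) => h; first by rewrite modn_small //; lia.
  have -> : c + 1 = n by rewrite /c; lia.
  rewrite modnn; lia.
pose s r := (r + k') %% n.
have sf : forall r, r < n -> s r = if r + k' < n then r + k' else r + k' - n.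
  move=> r rn; rewrite /s; case: ifP => h; first by rewrite modn_small.
  have -> : r + k' = (r + k' - n) + n by lia.
  by rewrite modnDr modn_small; lia.
set z := rk n.-1.
have [zn Qz] := rkP n.-1 ltac:(lia).
rewrite -/z in zn Qz.
have Qs : forall r, r < n -> r <> z -> Q (s r) = (Q r).+1.
  move=> r rn rz; rewrite /s QsAll modn_small ?addn1 //.
  have : Q r <> n.-1 by move=> E; apply: rz; apply: Qi => //; rewrite E Qz.
  have := Qn r; lia.
have nn1 : n.-1 + 1 = n by lia.
have Qsz : Q (s z) = 0 by rewrite /s QsAll Qz nn1 modnn.
have sn : forall r, r < n -> s r < n by move=> r _; rewrite /s ltn_pmod.
suff [m [a b cc]] : exists m, [/\ m + k' <= n,
   (forall r, m <= r -> r <> z -> r < n -> n <= r + k') &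
   (forall r, r < z -> (m <= r) != (m <= z))].
  exists (mkseq (fun u => m <= rk u) n); split; first by rewrite size_mkseq.
  split; first by rewrite size_mkseq.
  move=> i; rewrite sP => iP.
  rewrite /suffix !nthP //=; last lia.
  apply: (@key n _ Q s (fun r => m <= r) z) => //; try lia.
  - by rewrite size_mkseq.
  - move=> r rn; rewrite nth_mkseq //.
    have [h1 h2] := rkP (Q r) (Qn r); congr (_ <= _); exact: Qi.
  - exact: (@cond n m z k' s).
move: hp1; rewrite !inE => /orP[/eqP h|/orP[/eqP h|/eqP h]].
-
  have Q0 : Q 0 = 0 by rewrite /Q /c h mul0n addn0 mod0n.
  have : s z = 0 by apply: Qi => //; [exact: sn | rewrite Qsz Q0].
  rewrite sf // => E.
  have zk : z + k' = n by move: E; case: ifP; lia.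
  exists z; split; try lia.
  all: try (move=> r rz; rewrite (leqNgt z r) rz leqnn //).
-
  have Qn1 : Q n.-1 = 0.
    rewrite /Q /c h /=.
    have -> : k + n.-1 * k = n * k by rewrite -mulSn; congr (_ * _); lia.
    by rewrite mulnC modnMl.
  have : s z = n.-1 by apply: Qi => //; [exact: sn | lia | rewrite Qsz Qn1].
  rewrite sf // => E.
  have zk : z + k' = n.-1 by move: E; case: ifP; lia.
  exists z; split; try lia.
  all: try (move=> r rz; rewrite (leqNgt z r) rz leqnn //).
-
  have Q0 : Q 0 = n.-1 by rewrite /Q /c h mul0n addn0 modn_small; lia.
  have z0 : z = 0 by apply: Qi => //; rewrite Q0 Qz.
  exists (n - k'); split; try lia.
  all: try (move=> r; rewrite z0 //).
Qed.
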